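(* Let $\Bbbk$ be a field of characteristic $0$ and let $Q_1$ be the quiver with vertices $\{1,2\}$ and a single arrow $t:1\to2$. The zero double bracket is the unique $B$-linear double quasi-Poisson bracket on the path algebra $\Bbbk Q_1$, where $B=\Bbbk e_1\oplus\Bbbk e_2$.
   Context: The path algebra $\Bbbk Q_1$ is generated by $e_1,e_2,t$ with $e_ie_j=\delta_{ij}e_i$, $e_1+e_2=1$, $t=e_1te_2$. $\otimes=\otimes_\Bbbk$; Sweedler notation $d=d'\otimes d''$; outer structure $x(d'\otimes d'')y=xd'\otimes d''y$, inner structure $x*(d'\otimes d'')*y=d'y\otimes xd''$. A $B$-linear double bracket is a $\Bbbk$-bilinear map $A\times A\to A\otimes A$ vanishing when an argument lies in $B$, with $\{\!\{a,b\}\!\}=-\{\!\{b,a\}\!\}''\otimes\{\!\{b,a\}\!\}'$ and $\{\!\{a,bc\}\!\}=\{\!\{a,b\}\!\}c+b\{\!\{a,c\}\!\}$. Triple bracket: $\{\!\{a,b,c\}\!\}=\{\!\{a,\{\!\{b,c\}\!\}'\}\!\}\otimes\{\!\{b,c\}\!\}''+\tau\{\!\{b,\{\!\{c,a\}\!\}'\}\!\}\otimes\{\!\{c,a\}\!\}''+\tau^2\{\!\{c,\{\!\{a,b\}\!\}'\}\!\}\otimes\{\!\{a,b\}\!\}''$, $\tau(x_1\otimes x_2\otimes x_3)=x_3\otimes x_1\otimes x_2$. Quasi-Poisson: $\{\!\{a,b,c\}\!\}=\frac14\sum_{s=1,2}(ce_sa\otimes e_sb\otimes e_s-ce_sa\otimes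 e_s\otimes be_s-ce_s\otimes ae_sb\otimes e_s+ce_s\otimes ae_s\otimes be_s-e_sa\otimes e_sb\otimes e_sc+e_sa\otimes e_s\otimes be_sc+e_s\otimes ae_sb\otimes e_sc-e_s\otimes ae_s\otimes be_sc)$ for all $a,b,c$. *)

(* Defs.v *)
From HB Require Import structures.
From mathcomp Require Import all_boot all_algebra.
Set Implicit Arguments. Unset Strict Implicit. Unset Printing Implicit Defensive.
Import GRing.Theory.
Local Open Scope ring_scope.

(* The paths of the quiver Q_1 : vertices 1,2 (trivial paths e1, e2) and one
   arrow t : 1 -> 2.  These form a basis of the path algebra k Q_1. *)
Inductive Q1path := E1 | E2 | Tarr.

Definition p2o (p : Q1path) : 'I_3 :=
  match p with E1 => inord 0 | E2 => inord 1 | Tarr => inord 2 end.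
Definition o2p (i : 'I_3) : Q1path :=
  match val i with 0 => E1 | 1 => E2 | _ => Tarr end.
Lemma p2oK : cancel p2o o2p. Proof. by case; rewrite /o2p /= inordK. Qed.
HB.instance Definition _ := Countable.copy Q1path (can_type p2oK).
HB.instance Definition _ := Finite.copy Q1path (can_type p2oK).

(* Product of basis paths, following the conventions e_i e_j = delta_ij e_i,
   t = e1 t e2 (so e1 t = t, t e2 = t, all other products of t vanish). *)
Definition pmul (p q : Q1path) : option Q1path :=
  match p, q with
  | E1, E1 => Some E1
  | E2, E2 => Some E2
  | E1, Tarr => Some Tarr
  | Tarr, E2 => Some Tarr
  | _, _ => None
  end.

(* The path algebra k Q_1, as coordinate vectors on the path basis. *)
Notation pathalg k := {ffun Q1path -> k} (only parsing).
(* A (x) A and A (x) A (x) A, as coordinate arrays on the tensor bases. *)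
Notation tens2 k := {ffun Q1path * Q1path -> k} (only parsing).
Notation tens3 k := {ffun Q1path * Q1path * Q1path -> k} (only parsing).

Definition scl (k : fieldType) (T : finType) (c : k) (x : {ffun T -> k})
  : {ffun T -> k} := [ffun i => c * x i].
Notation "c *s x" := (scl c x) (at level 40).

Definition bas (k : fieldType) (p : Q1path) : pathalg k :=
  [ffun q => (q == p)%:R].

(* multiplication of k Q_1 (we do NOT use the pointwise ffun product) *)
Definition pmulv (k : fieldType) (p q : Q1path) : pathalg k :=
  match pmul p q with Some r => bas k r | None => 0 end.
Definition amul (k : fieldType) (x y : pathalg k) : pathalg k :=
  \sum_p \sum_q (x p * y q) *s pmulv k p q.

Definition tm2 (k : fieldType) (x y : pathalg k) : tens2 k :=
  [ffun pq => x pq.1 * y pq.2].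
Definition tm3 (k : fieldType) (x y z : pathalg k) : tens3 k :=
  [ffun r => x r.1.1 * y r.1.2 * z r.2].
Definition tm21 (k : fieldType) (d : tens2 k) (z : pathalg k) : tens3 k :=
  [ffun r => d r.1 * z r.2].

(* outer bimodule structure: x (d' (x) d'') y = x d' (x) d'' y *)
Definition lact2 (k : fieldType) (x : pathalg k) (d : tens2 k) : tens2 k :=
  \sum_p \sum_q d (p, q) *s tm2 (amul x (bas k p)) (bas k q).
Definition ract2 (k : fieldType) (d : tens2 k) (y : pathalg k) : tens2 k :=
  \sum_p \sum_q d (p, q) *s tm2 (bas k p) (amul (bas k q) y).

Definition swap2 (k : fieldType) (d : tens2 k) : tens2 k :=
  [ffun pq => d (pq.2, pq.1)].

Definition tau3 (k : fieldType) (X : tens3 k) : tens3 k :=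
  [ffun r => X (r.1.2, r.2, r.1.1)].

(* B = k e1 + k e2 *)
Definition inB (k : fieldType) (x : pathalg k) : Prop := x Tarr = 0.

Definition dbracket (k : fieldType) := pathalg k -> pathalg k -> tens2 k.

Definition is_double_bracket (k : fieldType) (br : dbracket k) : Prop :=
  [/\ (forall (c : k) x y z, br (c *s x + y) z = c *s br x z + br y z),
      (forall (c : k) x y z, br z (c *s x + y) = c *s br z x + br z y),
      (forall b x, inB b -> br b x = 0 /\ br x b = 0),
      (forall a b, br a b = - swap2 (br b a)) &
      (forall a b c, br a (amul b c) = ract2 (br a b) c + lact2 b (br a c))].

(* {{a, d'}} (x) d'' *)
Definition br_in1 (k : fieldType) (br : dbracket k) (a : pathalg k)
    (d : tens2 k) : tens3 k :=
  \sum_p \sum_q d (p, q) *s tm21 (br a (bas k p)) (bas k q).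

Definition triple_bracket (k : fieldType) (br : dbracket k) (a b c : pathalg k)
  : tens3 k :=
  br_in1 br a (br b c) + tau3 (br_in1 br b (br c a))
  + tau3 (tau3 (br_in1 br c (br a b))).

Definition qp_rhs (k : fieldType) (a b c : pathalg k) : tens3 k :=
  \sum_(s <- [:: E1; E2])
    let e := bas k s in
    (tm3 (amul (amul c e) a) (amul e b) e
     - tm3 (amul (amul c e) a) e (amul b e)
     - tm3 (amul c e) (amul (amul a e) b) e
     + tm3 (amul c e) (amul a e) (amul b e)
     - tm3 (amul e a) (amul e b) (amul e c)
     + tm3 (amul e a) e (amul (amul b e) c)
     + tm3 e (amul (amul a e) b) (amul e c)
     - tm3 e (amul a e) (amul (amul b e) c)).

Definition is_quasi_poisson (k : fieldType) (br : dbracket k) : Prop :=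
  forall a b c, triple_bracket br a b c = (4%:R)^-1 *s qp_rhs a b c.

Definition zero_bracket (k : fieldType) : dbracket k := fun _ _ => 0.
Arguments zero_bracket k _ _ : clear implicits.

(* Main.v *)
Require Import Defs.
From HB Require Import structures.
From mathcomp Require Import all_boot all_algebra ring.
Local Open Scope ring_scope.
Import GRing.Theory.
Definition qeqb (p q : Q1path) : bool :=
  match p, q with E1, E1 | E2, E2 | Tarr, Tarr => true | _, _ => false end.
Lemma eqQ p q : (p == q) = qeqb p q.
Proof. by case: p; case: q; rewrite /= ?eqxx //; apply/eqP. Qed.
Lemma uQ : uniq [:: E1; E2; Tarr]. Proof. by rewrite /= !inE !eqQ. Qed.
Lemma sumQ (V : nmodType) (F : Q1path -> V) : \sum_p F p = F E1 + F E2 + F Tarr.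
Proof.
rewrite (perm_big [:: E1; E2; Tarr]) /=; last first.
  apply: uniq_perm; [exact: index_enum_uniq | exact: uQ | ].
  by move=> x; rewrite mem_index_enum !inE !eqQ; case: x.
by rewrite !big_cons big_nil addr0 addrA.
Qed.
Section S.
Variable k : fieldType.
Lemma basE p q : bas k p q = (qeqb q p)%:R.
Proof. by rewrite ffunE eqQ. Qed.
Lemma amulE (x y : pathalg k) r : amul x y r =
  match r with E1 => x E1 * y E1 | E2 => x E2 * y E2
  | Tarr => x E1 * y Tarr + x Tarr * y E2 end.
Proof.
rewrite /amul sum_ffunE sumQ !sum_ffunE !sumQ !ffunE /pmulv /=.
case: r; rewrite !eqQ /=; ring.
Qed.
Lemma scl0 (T : finType) (c : k) : c *s (0 : {ffun T -> k}) = 0.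
Proof. by apply/ffunP => i; rewrite !ffunE mulr0. Qed.
Lemma lact20 x : lact2 x (0 : tens2 k) = 0.
Proof.
apply/ffunP => i; rewrite !sum_ffunE big1 ?ffunE // => p _.
by rewrite sum_ffunE big1 // => q _; rewrite !ffunE mul0r.
Qed.
Lemma ract20 x : ract2 (0 : tens2 k) x = 0.
Proof.
apply/ffunP => i; rewrite !sum_ffunE big1 ?ffunE // => p _.
by rewrite sum_ffunE big1 // => q _; rewrite !ffunE mul0r.
Qed.
Lemma br_in10 a d : br_in1 (zero_bracket k) a d = 0.
Proof.
apply/ffunP => i; rewrite !sum_ffunE big1 ?ffunE // => p _.
by rewrite sum_ffunE big1 // => q _; rewrite !ffunE mul0r mulr0.
Qed.
Lemma tau30 : @tau3 k 0 = 0.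
Proof. by apply/ffunP => i; rewrite !ffunE. Qed.
Lemma qp0 (a b c : pathalg k) : qp_rhs a b c = 0.
Proof.
apply/ffunP => -[[p q] r]; rewrite /qp_rhs big_cons big_cons big_nil.
case: p; case: q; case: r; rewrite !ffunE /= !amulE !basE ?eqQ /=; ring.
Qed.
Lemma br_zero (br : dbracket k) : is_double_bracket br ->
  br (bas k Tarr) (bas k Tarr) = 0 -> forall a b, br a b = 0.
Proof.
case=> L1 L2 HB _ _ Htt a b.
set t := bas k Tarr.
have dec : forall x : pathalg k, x = x Tarr *s t + (x - x Tarr *s t).
  by move=> x; rewrite addrC subrK.
have inBr : forall x : pathalg k, inB (x - x Tarr *s t).
  by move=> x; rewrite /inB !ffunE eqxx mulr1 subrr.
rewrite (dec a) L1 (proj1 (HB _ b (inBr a))) addr0.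
rewrite (dec b) L2 (proj2 (HB _ t (inBr b))) addr0 Htt !scl0 //.
Qed.
End S.
Lemma key (k : fieldType) (char0 : [pchar k] =i pred0) (br : dbracket k) :
  is_double_bracket br -> br (bas k Tarr) (bas k Tarr) = 0.
Proof.
move=> Hd; have [L1 L2 HB AS Le] := Hd.
set t := bas k Tarr; set d := br t t.
have inB1 : inB (bas k E1) by rewrite /inB basE.
have inB2 : inB (bas k E2) by rewrite /inB basE.
have H1 : d = lact2 (bas k E1) d.
  have -> : lact2 (bas k E1) d = br t (amul (bas k E1) t).
    by rewrite Le (proj2 (HB _ t inB1)) ract20 add0r.
  congr (br t _); apply/ffunP => r; rewrite amulE /t !basE; case: r => /=; ring.
have H2 : d = ract2 d (bas k E2).
  have -> : ract2 d (bas k E2) = br t (amul t (bas k E2)).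
    by rewrite Le (proj2 (HB _ t inB2)) lact20 addr0.
  congr (br t _); apply/ffunP => r; rewrite amulE /t !basE; case: r => /=; ring.
have H3 : d = - swap2 d by rewrite /d {1}AS.
have C1 q : d (E2, q) = 0.
  rewrite {1}H1 /lact2 sum_ffunE sumQ !sum_ffunE !sumQ !ffunE /= !amulE !basE /=; ring.
have C2 p : d (p, E1) = 0.
  rewrite {1}H2 /ract2 sum_ffunE sumQ !sum_ffunE !sumQ !ffunE /= !amulE !basE /=; ring.
have C3 p q : d (p, q) = - d (q, p).
  by rewrite {1}H3 !ffunE.
have two : (2%:R : k) != 0 by move/pcharf0P: char0 => ->.
have C4 : d (Tarr, Tarr) = 0.
  have : (2%:R : k) * d (Tarr, Tarr) = 0 by rewrite mulr_natl mulr2n {1}C3 addNr.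
  by move/eqP; rewrite mulf_eq0 (negPf two) => /eqP.
apply/ffunP => -[p q]; rewrite ffunE.
case: p; case: q; rewrite ?C1 ?C2 ?C4 //.
- by rewrite C3 C1 oppr0.
- by rewrite C3 C2 oppr0.
- by rewrite C3 C1 oppr0.
Qed.


Theorem lemma4p3 (k : fieldType) (char0 : [pchar k] =i pred0) :
  (is_double_bracket (zero_bracket k) /\ is_quasi_poisson (zero_bracket k)) /\
  (forall br : dbracket k,
     is_double_bracket br -> is_quasi_poisson br ->
     forall a b : pathalg k, br a b = 0).
Proof.
split; last first.
  by move=> br Hd _; apply: br_zero => //; apply: key.
split.
  split => //=.
  - by move=> c x y z; rewrite scl0 addr0.
  - by move=> c x y z; rewrite scl0 addr0.
  - by move=> a b; apply/ffunP => i; rewrite !ffunE oppr0.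
  - by move=> a b c; rewrite lact20 ract20 addr0.
by move=> a b c; rewrite /triple_bracket !br_in10 !tau30 qp0 scl0 !addr0.
Qed.
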